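(* For $n\ge3$ and $k\ge4$, the number of cyclic permutations $\pi\in\mathfrak S_n$ whose one-line notation avoids $\delta_k=k(k-1)\cdots21$, such that every cyclic rotation of $C(\pi)$ avoids $1342$, and with $\pi_1=n-1$ and $\pi_n=1$, equals $b^\circ_{n-1,k-1}(1342)$, where $b^\circ_{m,j}(1342)$ denotes the number of cyclic permutations $\sigma\in\mathfrak S_m$ whose one-line notation avoids $\delta_j$, such that every cyclic rotation of $C(\sigma)$ avoids $1342$, and with $\sigma_1=m$.
   Context: A permutation $\pi\in\mathfrak S_n$ is cyclic if it consists of a single $n$-cycle. For cyclic $\pi$, $C(\pi)=(1,c_2,\dots,c_n)$ with $c_2=\pi(1)$, $c_{i+1}=\pi(c_i)$; its cyclic rotations are the sequences $c_ic_{i+1}\cdots c_nc_1\cdots c_{i-1}$ (with $c_1=1$). A sequence avoids a pattern $\sigma\in\mathfrak S_m$ if no subsequence of length $m$ is in the same relative order as $\sigma$. The one-line notation of $\pi$ is $\pi_1\cdots\pi_n$, $\pi_i=\pi(i)$. *)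

(* Defs.v *)
From mathcomp Require Import all_boot all_fingroup.
Set Implicit Arguments. Unset Strict Implicit. Unset Printing Implicit Defensive.

Definition oneline n (s : {perm 'I_n}) : seq nat :=
  [seq (s i : nat).+1 | i <- enum 'I_n].

Definition cyclicb n (s : {perm 'I_n}) : bool := #|porbits s| == 1.

(* C(pi) = (1, pi(1), pi(pi(1)), ..., ) of length n, in values 1..n. *)
Definition Cseq n (s : {perm 'I_n}) : seq nat :=
  traject (fun x => nth 0 (oneline s) x.-1) 1 n.

Definition same_order (t p : seq nat) : bool :=
  (size t == size p) &&
  all (fun i => all (fun j =>
         (nth 0 t i < nth 0 t j) == (nth 0 p i < nth 0 p j))
       (iota 0 (size t))) (iota 0 (size t)).

Definition contains (w p : seq nat) : bool :=
  [exists m : (size w).-tuple bool, same_order (mask m w) p].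

Definition avoids (w p : seq nat) : bool := ~~ contains w p.

Definition delta (k : nat) : seq nat := rev (iota 1 k).

Definition p1342 : seq nat := [:: 1; 3; 4; 2].

Definition rots_avoid n (s : {perm 'I_n}) (p : seq nat) : bool :=
  all (fun i => avoids (rot i (Cseq s)) p) (iota 0 n).

Definition bcirc (m j : nat) : nat :=
  #|[set s : {perm 'I_m} | [&& cyclicb s, avoids (oneline s) (delta j),
                              rots_avoid s p1342 & nth 0 (oneline s) 0 == m]]|.

(* Main.v *)
Require Import Defs.
From mathcomp Require Import all_boot all_fingroup.
From mathcomp Require Import zify.
Set Implicit Arguments. Unset Strict Implicit. Unset Printing Implicit Defensive.

Lemma containsP w p :
  reflect (exists2 t, subseq t w & same_order t p) (contains w p).
Proof.
apply: (iffP existsP) => [[M H]|[t st H]].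
  by exists (mask M w) => //; apply: mask_subseq.
case/subseqP: st => M sM tE; subst t.
have sM' : size M == size w by apply/eqP.
by exists (Tuple sM').
Qed.

Lemma same_order1342 a b c d :
  same_order [:: a; b; c; d] p1342 = [&& a < d, d < b & b < c].
Proof.
rewrite /same_order /=.
rewrite -[1 < 1]/false -[1<3]/true -[1<4]/true -[1<2]/true -[3<1]/false -[3<3]/false -[3<4]/true -[3<2]/false.
rewrite -[4 < 1]/false -[4<3]/false -[4<4]/false -[4<2]/false -[2<1]/false -[2<3]/true -[2<4]/true -[2<2]/false.
rewrite !ltnn !eqb_id !eqbF_neg !andbT /=.
apply/idP/idP.
  move=> /andP[/and3P[h1 h2 h3] /andP[/and3P[h4 h5 h6] /andP[/and3P[h7 h8 h9] /and3P[h10 h11 h12]]]].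
  apply/and3P; split=> //; lia.
case/and3P=> h1 h2 h3.
apply/and4P; split; try apply/and3P; try split; lia.
Qed.

Lemma same_order_size t p : same_order t p -> size t = size p.
Proof. by case/andP=> /eqP. Qed.

Lemma same_order1342E t : same_order t p1342 ->
  exists a b c d, t = [:: a; b; c; d] /\ [/\ a < d, d < b & b < c].
Proof.
move=> H; have := same_order_size H.
case: t H => [|a [|b [|c [|d [|e t]]]]] //= H _.
by exists a, b, c, d; split=> //; move: H; rewrite same_order1342 => /and3P.
Qed.

Definition gtr (a b : nat) := b < a.

Lemma nth_delta j i : i < j -> nth 0 (delta j) i = j - i.
Proof.
move=> hi; rewrite /delta nth_rev ?size_iota // nth_iota; lia.
Qed.

Lemma same_order_delta t j :
  same_order t (delta j) = (size t == j) && sorted gtr t.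
Proof.
rewrite /same_order /delta size_rev size_iota -/(delta j).
case: eqP => [st|]//=; subst j.
apply/idP/idP.
  move=> H; apply/(sortedP 0) => i hi.
  have := allP H i.+1; rewrite mem_iota /= => /(_ hi) /allP /(_ i).
  rewrite mem_iota /= => /(_ (ltnW hi)) /eqP.
  rewrite !nth_delta //; last exact: ltnW.
  rewrite /gtr => ->; lia.
move=> srt; apply/allP => i; rewrite mem_iota add0n => hi.
apply/allP => j'; rewrite mem_iota add0n => hj; rewrite !nth_delta //.
have tr : transitive gtr by move=> y x z; rewrite /gtr => h1 h2; lia.
have S := sorted_ltn_nth tr 0 srt.
case: (ltngtP i j') => h.
- have := S i j' hi hj h; rewrite /gtr => h'.
  apply/eqP; transitivity false; [apply/negbTE; rewrite -leqNgt; exact: ltnW|lia].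
- have := S j' i hj hi h; rewrite /gtr => h'.
  by apply/eqP; rewrite h'; symmetry; apply/idP; lia.
- subst j'; by rewrite !ltnn.
Qed.

Lemma size_oneline n (s : {perm 'I_n}) : size (oneline s) = n.
Proof. by rewrite size_map size_enum_ord. Qed.

Lemma nth_oneline n (s : {perm 'I_n}) (i : 'I_n) : nth 0 (oneline s) i = (s i).+1.
Proof. by rewrite /oneline (nth_map i) ?size_enum_ord // nth_ord_enum. Qed.

Lemma Cseq_traject n (s : {perm 'I_n}) (x0 : 'I_n) : val x0 = 0 ->
  Cseq s = [seq (val y).+1 | y <- traject s x0 n].
Proof.
move=> h0; rewrite /Cseq.
suff H : forall k (y : 'I_n), traject (fun x => nth 0 (oneline s) x.-1) (val y).+1 k
   = [seq (val z).+1 | z <- traject s y k] by rewrite -(H n x0) h0.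
elim=> [|k IH] y //=.
by rewrite nth_oneline IH.
Qed.

Lemma cyclicP n (s : {perm 'I_n}) x : cyclicb s = (#|porbit s x| == n).
Proof.
rewrite /cyclicb; apply/idP/idP.
  move/cards1P => [A hA].
  have hx : porbit s x = A by apply/set1P; rewrite -hA imset_f.
  have hall : porbit s x = [set: 'I_n].
    apply/setP=> y; rewrite inE.
    have hy : porbit s y = A by apply/set1P; rewrite -hA imset_f.
    by rewrite -eq_porbit_mem hy hx eqxx.
  by rewrite hall cardsT card_ord.
move=> /eqP hc.
have hall : porbit s x = [set: 'I_n].
  by apply/eqP; rewrite eqEcard subsetT cardsT card_ord hc leqnn.
apply/cards1P; exists (porbit s x).
apply/setP=> A; rewrite inE; apply/imsetP/eqP => [[y _ ->]|->].
  by apply/eqP; rewrite eq_porbit_mem hall inE.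
by exists x.
Qed.

Lemma cyclic_traject n (s : {perm 'I_n}) x : cyclicb s = uniq (traject s x n).
Proof.
rewrite (cyclicP s x); apply/idP/idP => [/eqP hc|hu].
  by have := uniq_traject_porbit s x; rewrite hc.
have h1 : n <= #|porbit s x|.
  have := uniq_leq_size hu (s2 := enum (porbit s x)).
  rewrite size_traject -cardE; apply => y /trajectP [i _ ->].
  by rewrite mem_enum -permX mem_porbit.
have h2 : #|porbit s x| <= n by rewrite -[n in _ <= n]card_ord max_card.
by rewrite eqn_leq h1 h2.
Qed.

Lemma cyclic_iter n (s : {perm 'I_n}) x : cyclicb s -> iter n s x = x.
Proof. by rewrite (cyclicP s x) => /eqP hc; have := iter_porbit s x; rewrite hc. Qed.

Definition Fp m (s : {perm 'I_m}) : {perm 'I_m.+1} :=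
  lift_perm ord_max ord_max s * tperm ord0 ord_max.

Section Fp.
Variable m : nat.
Variable s : {perm 'I_m.+1}.
Local Notation L := (lift (@ord_max m.+1)).
Local Notation p := (Fp s).

Lemma valL (x : 'I_m.+1) : val (L x) = val x.
Proof. by rewrite /= /bump leqNgt ltn_ord. Qed.

Lemma natL (x : 'I_m.+1) : nat_of_ord (L x) = nat_of_ord x.
Proof. exact: valL. Qed.

Lemma Fp_max : p ord_max = ord0.
Proof. by rewrite /Fp permM lift_perm_id tpermR. Qed.

Lemma Fp_lift x : p (L x) = if val (s x) == 0 then ord_max else L (s x).
Proof.
rewrite /Fp permM lift_perm_lift.
case: eqP => h.
  have -> : L (s x) = ord0 by apply: val_inj; rewrite valL h.
  by rewrite tpermL.
rewrite tpermD //; first by apply/eqP => /(congr1 val); rewrite valL => /esym /h.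
exact: neq_lift.
Qed.

Lemma L0 : L ord0 = ord0.
Proof. by apply: val_inj; rewrite valL. Qed.

Lemma trajA k y : 0 \notin map val (traject s (s y) k) ->
  traject p (L y) k.+1 = map L (traject s y k.+1).
Proof.
elim: k y => [|k IH] y //= h.
rewrite in_cons negb_or eq_sym in h; case/andP: h => h1 h2.
rewrite Fp_lift (negbTE h1).
by have := IH (s y) h2 => /= ->.
Qed.

Lemma trajB k y : ord_max \notin traject p (L y) k.+1 ->
  traject p (L y) k.+1 = map L (traject s y k.+1).
Proof.
elim: k y => [|k IH] y //= h.
rewrite in_cons negb_or in h; case/andP: h => _ h.
have h1 : val (s y) != 0.
  apply/negP => /eqP e; move: h; rewrite Fp_lift e eqxx /=.
  by rewrite in_cons eqxx.
move: h; rewrite Fp_lift (negbTE h1) => h.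
by have := IH (s y) h => /= ->.
Qed.

Lemma Fp_traject : cyclicb s ->
  traject p ord0 m.+2 = rcons (map L (traject s ord0 m.+1)) ord_max.
Proof.
move=> cs.
have := cs; rewrite (cyclic_traject _ ord0) trajectS cons_uniq => /andP[h1 h2].
have h0 : 0 \notin map val (traject s (s ord0) m).
  apply/mapP => -[y hy /esym hv].
  have e : y = ord0 by apply: val_inj.
  by move: hy; rewrite e => hy; rewrite hy in h1.
have tA := trajA h0.
have hit : iter m.+1 p (L ord0) = ord_max.
  rewrite iterS -(nth_traject _ (ltnSn m)) tA (nth_map ord0) ?size_traject //.
  rewrite nth_traject // Fp_lift -iterS cyclic_iter //=.
by rewrite trajectSr -L0 tA hit.
Qed.

Lemma Fp_Cseq : cyclicb s -> Cseq p = Cseq s ++ [:: m.+2].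
Proof.
move=> cs; rewrite (Cseq_traject _ (x0 := ord0)) // Fp_traject //.
rewrite (Cseq_traject _ (x0 := ord0)) // map_rcons -map_comp -cats1.
by congr (_ ++ _); apply: eq_map => x; rewrite [LHS]/comp valL.
Qed.

Definition hF (x : nat) := if x == 1 then m.+2 else x.

Lemma Fp_oneline : oneline p = map hF (oneline s) ++ [:: 1].
Proof.
apply: (@eq_from_nth _ 0).
  by rewrite size_cat size_map !size_oneline addn1.
rewrite size_oneline => i hi.
rewrite nth_cat size_map size_oneline.
case: ltnP => hi2.
  have -> : nth 0 (oneline p) i = nth 0 (oneline p) (L (Ordinal hi2)) by rewrite natL.
  rewrite nth_oneline (nth_map 0) ?size_oneline // -[i]/(nat_of_ord (Ordinal hi2)).
  rewrite nth_oneline Fp_lift /hF.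
  rewrite eqSS; case: eqP => _; by rewrite ?natL.
have -> : i = m.+1 by lia.
have -> : nth 0 (oneline p) m.+1 = nth 0 (oneline p) (@ord_max m.+1) by [].
by rewrite nth_oneline Fp_max subnn.
Qed.

Lemma Fp_cyclic : cyclicb p = cyclicb s.
Proof.
apply/idP/idP.
  rewrite (cyclic_traject _ ord_max) (cyclic_traject _ ord0) trajectS Fp_max.
  rewrite cons_uniq => /andP[h1 h2].
  by rewrite -L0 in h1 h2; rewrite trajB // map_inj_uniq // in h2; apply: lift_inj.
move=> cs.
rewrite (cyclic_traject _ ord0) Fp_traject // rcons_uniq.
rewrite map_inj_uniq; last exact: lift_inj.
rewrite -(cyclic_traject _ ord0) cs andbT.
apply/mapP => -[y _ /eqP]; by rewrite (negbTE (neq_lift _ _)).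
Qed.

End Fp.

Definition crot (w p : seq nat) := has (fun i => contains (rot i w) p) (iota 0 (size w)).

Lemma rot_catN (w : seq nat) N i : i <= size w ->
  rot i (w ++ [:: N]) = drop i w ++ N :: take i w.
Proof.
move=> hi; rewrite /rot drop_cat take_cat.
case: ltnP => h; first by rewrite -catA.
have e : i = size w by apply/eqP; rewrite eqn_leq hi h.
by rewrite e subnn drop_size take_size /= cats0.
Qed.

Lemma subseq_drop_pred (t u v : seq nat) x :
  x \notin t -> subseq t (u ++ x :: v) -> subseq t (u ++ v).
Proof.
move=> hx hs.
have : subseq t (filter (predC1 x) (u ++ x :: v)).
  rewrite subseq_filter hs andbT; apply/allP => y hy /=.
  by apply: contraNneq hx => <-.
move/subseq_trans; apply.
rewrite filter_cat /= eqxx /= -filter_cat; exact: filter_subseq.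
Qed.

Lemma crot_ext (w : seq nat) M rest :
  w = 1 :: M :: rest -> uniq w -> (forall x, x \in w -> 0 < x <= M) ->
  crot (w ++ [:: M.+1]) p1342 = crot w p1342.
Proof.
move=> hw uw hx.
have NW : M.+1 \notin w by apply/negP => /hx; lia.
rewrite /crot size_cat addn1.
apply/hasP/hasP => -[i]; rewrite mem_iota add0n => hi.
  rewrite rot_catN; last by rewrite -ltnS.
  case/containsP => t ht so.
  have [a [b [c [d [et [h1 h2 h3]]]]]] := same_order1342E so; subst t.
  have hmem : forall y, y \in [:: a; b; c; d] -> y \in w ++ [:: M.+1].
    move=> y hy; have := mem_subseq ht hy.
    rewrite !mem_cat !inE => /or3P[/mem_drop->|->|/mem_take->]; by rewrite ?orbT.
  have hM2 : 1 < M.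
    have hMw : M \in w by rewrite hw !inE eqxx orbT.
    have g0 : 0 < M by have := hx M hMw; case/andP.
    have g1 : 1 != M by move: uw; rewrite hw /= !inE negb_or => /andP[/andP[]].
    lia.
  have inw : forall y, y \in w ++ [:: M.+1] -> y != M.+1 -> 0 < y <= M.
    by move=> y; rewrite mem_cat inE => /orP[/hx //|/eqP -> ]; rewrite eqxx.
  case: (eqVneq c M.+1) => hc.
    subst c.
    have ua : uniq (drop i w ++ M.+1 :: take i w).
      by rewrite -rot_catN ?rot_uniq ?cat_uniq ?uw //= ?andbT ?orbF ?NW // -ltnS.
    move: ht; rewrite -[[:: a; b; M.+1; d]]/([:: a; b] ++ M.+1 :: [:: d]).
    rewrite uniq_subseq_pivot // sub1seq => /andP[hab hd].
    have ha : 0 < a <= M by apply: inw; [apply: hmem; rewrite !inE eqxx ?orbT | apply/eqP; lia].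
    have hb : 0 < b <= M by apply: inw; [apply: hmem; rewrite !inE eqxx ?orbT | apply/eqP; lia].
    have hd' : 0 < d <= M by apply: inw; [apply: hmem; rewrite !inE eqxx ?orbT | apply/eqP; lia].
    case: i hi hab hd ua => [|[|i]] hi hab hd ua.
    - by move: hd; rewrite take0.
    - move: hd; rewrite hw /= inE => /eqP ed; lia.
    have hbM : b != M.
      have hbb : b \in [:: a; b] by rewrite !inE eqxx orbT.
      apply: contraTneq (mem_subseq hab hbb) => ->.
      have uw2 := uw; rewrite -(cat_take_drop i.+2 w) cat_uniq in uw2.
      case/and3P: uw2 => _ /hasPn H _.
      apply/negP => hM; have := H _ hM; by rewrite /= hw /= !inE eqxx orbT.
    have hsz : i.+2 < size w.
      rewrite ltnNge; apply/negP => hs.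
      by move: (size_subseq hab); rewrite drop_oversize.
    exists i.+2; first by rewrite mem_iota.
    apply/containsP; exists [:: a; b; M; d]; last first.
      rewrite same_order1342; apply/and3P; split; lia.
    rewrite /rot -[[:: a; b; M; d]]/([:: a; b] ++ [:: M; d]).
    apply: cat_subseq => //.
    have hdt : d \in take i rest.
      move: hd; rewrite hw /= !inE => /or3P[/eqP|/eqP|//]; lia.
    rewrite hw /=. have -> : (M == 1) = false by apply/eqP; lia.
    by rewrite eqxx sub1seq.
  have hc' : 0 < c <= M by apply: inw => //; apply: hmem; rewrite !inE eqxx ?orbT.
  have hN : M.+1 \notin [:: a; b; c; d].
    apply/negP; rewrite !inE => /or4P[]/eqP; lia.
  have ht2 := subseq_drop_pred hN ht.
  case: (ltnP i (size w)) => hi2.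
    exists i; first by rewrite mem_iota.
    by apply/containsP; exists [:: a; b; c; d].
  have ei : i = size w by lia.
  exists 0; first by rewrite mem_iota hw.
  apply/containsP; exists [:: a; b; c; d] => //.
  by move: ht2; rewrite ei drop_size take_size rot0.
move=> hc; exists i; first by rewrite mem_iota; lia.
rewrite rot_catN; last by lia.
case/containsP: hc => t ht so; apply/containsP; exists t => //.
apply: subseq_trans ht _; rewrite /rot.
apply: cat_subseq => //; exact: subseq_cons.
Qed.

Lemma gtr_trans : transitive gtr.
Proof. by move=> y x z; rewrite /gtr => h1 h2; lia. Qed.

Lemma contains_dec (w t : seq nat) j :
  subseq t w -> sorted gtr t -> j <= size t -> contains w (delta j).
Proof.
move=> ht st hj; apply/containsP; exists (take j t).
  exact: subseq_trans (take_subseq _ _) ht.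
by rewrite same_order_delta size_takel // eqxx take_sorted.
Qed.

Lemma containsdP w j :
  reflect (exists t, [/\ subseq t w, sorted gtr t & size t = j]) (contains w (delta j)).
Proof.
apply: (iffP (containsP _ _)) => [[t ht]|[t [ht st sz]]].
  by rewrite same_order_delta => /andP[/eqP sz st]; exists t.
by exists t => //; rewrite same_order_delta sz eqxx.
Qed.

Definition hG (M x : nat) := if x == 1 then M.+1 else x.

Lemma subseq_cat_split (t u v : seq nat) : subseq t (u ++ v) ->
  exists t1 t2, [/\ t = t1 ++ t2, subseq t1 u & subseq t2 v].
Proof.
case/subseqP => M sM ->.
exists (mask (take (size u) M) u), (mask (drop (size u) M) v); split.
- by rewrite -mask_cat ?cat_take_drop // size_takel // sM size_cat leq_addr.
- exact: mask_subseq.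
- exact: mask_subseq.
Qed.

Section Dec.
Variable M : nat.
Variable o : seq nat.
Hypothesis uo : uniq o.
Hypothesis ho : forall x, x \in o -> 0 < x <= M.

Lemma E1aux t : subseq t o -> 1 \notin t -> sorted gtr t ->
  contains (map (hG M) o ++ [:: 1]) (delta (size t).+1).
Proof.
move=> ht h1 st.
have tpos : forall y, y \in t -> 1 < y.
  move=> y hy; have := ho (mem_subseq ht hy).
  have : y != 1 by apply: contraNneq h1 => <-.
  lia.
apply/containsdP; exists (t ++ [:: 1]); split.
- apply: cat_subseq => //.
  have -> : t = map (hG M) t.
    rewrite -{1}(map_id t); apply/eq_in_map => y hy.
    by rewrite /hG; have := tpos y hy; case: eqP => // ->.
  exact: map_subseq.
- case: t ht h1 st tpos => [|x t'] //= ht h1 st tpos.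
  rewrite cat_path st /= andbT /gtr.
  by apply: tpos; apply: mem_last.
- by rewrite size_cat addn1.
Qed.

Lemma E1 j o1 o2 : o = o1 ++ 1 :: o2 -> 2 \in o2 -> 2 <= j ->
  contains o (delta j) -> contains (map (hG M) o ++ [:: 1]) (delta j.+1).
Proof.
move=> eo h2 hj /containsdP [t [ht st sz]].
case: (boolP (1 \in t)) => h1; last by rewrite -sz; apply: E1aux.
case/splitPr: h1 st ht sz => t1 t2 st ht sz.
have et2 : t2 = [::].
  case: t2 st ht sz => // y t2 st ht sz.
  have := (cat_sorted2 st).2 => /= /andP[hy _].
  have : y \in o by apply: (mem_subseq ht); rewrite mem_cat !inE eqxx !orbT.
  move/ho; rewrite /gtr in hy; lia.
subst t2.
have uo' := uo; rewrite eo cat_uniq /= negb_or in uo'.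
case/and3P: uo' => _ /andP[n1 n2] /andP[n3 _].
have o1n : forall y, y \in o1 -> (y != 1) && (y != 2).
  move=> y hy; apply/andP; split.
    by apply: contraNneq n1 => <-.
  apply/negP => /eqP e; subst y.
  by move/hasP: n2 => []; exists 2.
have t1o : subseq t1 o1.
  by move: ht; rewrite {1}eo uniq_subseq_pivot -?eo // => /andP[].
case: t1 st ht sz t1o => [|x t1] st ht sz t1o; first by move: sz hj => /= <-.
have n1' : 1 \notin x :: t1 ++ [:: 2].
  rewrite -cat_cons mem_cat negb_or /= andbT.
  by apply/negP => /(mem_subseq t1o) /o1n /andP[/eqP].
have sub' : subseq (x :: t1 ++ [:: 2]) o.
  rewrite eo -cat_cons; apply: cat_subseq => //.
  by rewrite /= sub1seq.
have st' : sorted gtr (x :: t1 ++ [:: 2]).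
  move: st; rewrite /= !cat_path /= !andbT => /andP[-> hl] /=.
  have := o1n _ (mem_subseq t1o (mem_last x t1)).
  move: hl; rewrite /gtr => hl /andP[_ /eqP g2]; have g2' : @last nat x t1 <> 2 := g2; lia.
have -> : j = size (x :: t1 ++ [:: 2]) by rewrite -sz /= !size_cat.
exact: E1aux sub' n1' st'.
Qed.

Lemma E2 j o' : o = M :: o' -> 1 \in o -> 1 < M ->
  contains (map (hG M) o ++ [:: 1]) (delta j.+1) -> contains o (delta j).
Proof.
move=> eo h1o hM /containsdP [t [ht st sz]].
have [t1 [t2 [et h1 h2]]] := subseq_cat_split ht.
have sz2 : size t2 <= 1 by have := size_subseq h2.
have e12 : size t1 + size t2 = j.+1 by rewrite -size_cat -et.
have sz1 : j <= size t1 by lia.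
have st1 : sorted gtr t1 by move: st; rewrite et => /cat_sorted2 [].
have mapb : forall y, y \in map (hG M) o -> 0 < y <= M.+1.
  move=> y /mapP [x hx ->]; rewrite /hG; case: eqP => _;
  by case/andP: (ho hx) => ? ?; apply/andP; split; lia.
have hGid : forall z, z != 1 -> hG M z = z by move=> z /negbTE; rewrite /hG => ->.
case: (boolP (M.+1 \in t1)) => hN; last first.
  apply: (contains_dec _ st1 sz1).
  have : subseq t1 (filter (predC1 M.+1) (map (hG M) o)).
    rewrite subseq_filter h1 andbT; apply/allP => y hy /=.
    by apply: contraNneq hN => <-.
  move/subseq_trans; apply.
  rewrite filter_map.
  have -> : map (hG M) (filter (preim (hG M) (predC1 M.+1)) o) =
            filter (preim (hG M) (predC1 M.+1)) o.
    rewrite -{2}(map_id (filter _ _)); apply/eq_in_map => x.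
    by rewrite mem_filter /= /hG; case: (x =P 1) => [->|] //=; rewrite eqxx.
  exact: filter_subseq.
case: t1 h1 st1 sz1 hN {et e12} => [|x t1'] h1 st1 sz1 hN //.
have ex : x = M.+1.
  have := mapb x (mem_subseq h1 (mem_head _ _)).
  case: (eqVneq x M.+1) => // hx; rewrite inE eq_sym (negbTE hx) /= in hN.
  have := st1; rewrite /= (path_sortedE gtr_trans) => /andP[/allP /(_ _ hN)].
  rewrite /gtr; lia.
subst x.
have [o1 [o2 eo12]] : exists o1 o2, o = o1 ++ 1 :: o2.
  by case/splitPr: h1o => o1 o2; exists o1, o2.
have uo' := uo; rewrite eo12 cat_uniq /= negb_or in uo'.
case/and3P: uo' => _ /andP[n1 n2] /andP[n3 _].
have ho2 : forall y, y \in o2 -> y \in o by move=> y hy; rewrite eo12 mem_cat inE hy !orbT.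
have em : map (hG M) o = o1 ++ M.+1 :: o2.
  rewrite eo12 map_cat /= {2}/hG eqxx; congr (_ ++ _ :: _).
    rewrite -{2}(map_id o1); apply/eq_in_map => y hy; apply: hGid.
    by apply: contraNneq n1 => <-.
  rewrite -{2}(map_id o2); apply/eq_in_map => y hy; apply: hGid.
  by apply: contraNneq n3 => <-.
have um : uniq (o1 ++ M.+1 :: o2).
  rewrite -em map_inj_in_uniq // => x y hx hy; rewrite /hG.
  case/andP: (ho hx) => hx1 hx2; case/andP: (ho hy) => hy1 hy2.
  case: (x =P 1) => [ex|nx]; case: (y =P 1) => [ey|ny] e.
  - by rewrite ex ey.
  - by rewrite -e ltnn in hy2.
  - by rewrite e ltnn in hx2.
  - exact: e.
have {}h1 : subseq t1' o2.
  have h1' : subseq ([::] ++ M.+1 :: t1') (o1 ++ M.+1 :: o2) by rewrite -em.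
  by move: h1'; rewrite uniq_subseq_pivot // => /andP[].
case: o1 eo12 n1 n2 um em => [|z o1] eo12 n1 n2 um em.
  by move: eo12; rewrite eo /= => -[] e; move: hM; rewrite e.
move: eo12; rewrite eo /= => -[ez eo'].
subst z.
apply: (contains_dec (t := M :: t1')) => //.
- rewrite /= eqxx eo'.
  apply: (subseq_trans h1); apply: (subseq_trans (subseq_cons o2 1)).
  exact: suffix_subseq.
- rewrite /= (path_sortedE gtr_trans) (path_sorted st1) andbT.
  apply/allP => y hy; rewrite /gtr.
  have hy2 := mem_subseq h1 hy.
  have := ho (ho2 _ hy2).
  have : y != M.
    apply: contraTneq hy2 => ->.
    by apply/negP => hh; move/hasP: n2 => []; exists M => //; rewrite inE eqxx.
  move/eqP => hh /andP[_ hh2]; lia.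
Qed.

End Dec.

Lemma subseq2_nth (T : eqType) (s : seq T) x0 a b : a < b -> b < size s ->
  subseq [:: nth x0 s a; nth x0 s b] s.
Proof.
move=> hab hb.
rewrite -[s in subseq _ s](cat_take_drop b) -cat1s.
apply: cat_subseq; rewrite sub1seq.
  have hs : a < size (take b s) by rewrite size_takel // ltnW.
  by have := mem_nth x0 hs; rewrite nth_take.
have hs : 0 < size (drop b s) by rewrite size_drop; lia.
by have := mem_nth x0 hs; rewrite nth_drop addn0.
Qed.

Lemma cyclic_mem n (s : {perm 'I_n}) x y : cyclicb s -> y \in traject s x n.
Proof.
rewrite (cyclicP s x) => /eqP hc.
have hall : porbit s x = [set: 'I_n].
  by apply/eqP; rewrite eqEcard subsetT cardsT card_ord hc leqnn.
have := porbit_traject s x y; rewrite hc => <-.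
by rewrite hall inE.
Qed.

Section K.
Variable m : nat.
Variable s : {perm 'I_m.+1}.
Hypothesis hm : 2 <= m.
Hypothesis cs : cyclicb s.
Hypothesis h0 : val (s ord0) = m.
Hypothesis ra : rots_avoid s p1342.

Local Notation it i := (iter i s ord0).
Local Notation T := (traject s ord0 m.+1).

Lemma uT : uniq T.
Proof. by rewrite -cyclic_traject. Qed.

Lemma iter_inj i i' : i < m.+1 -> i' < m.+1 -> it i = it i' -> i = i'.
Proof.
move=> hi hi' e; apply/eqP; rewrite -(nth_uniq ord0 _ _ uT) ?size_traject //.
by rewrite !nth_traject // e.
Qed.

Lemma K : val ((s^-1)%g ord0) < val ((s^-1)%g (inord 1)).
Proof.
set y1 : 'I_m.+1 := inord 1.
have vy1 : val y1 = 1 by rewrite /y1 /= inordK //; lia.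
have [j hj ej] : exists2 j, j < m.+1 & y1 = it j.
  by have /trajectP [j hj ->] := cyclic_mem ord0 y1 cs; exists j.
have j0 : j != 0 by apply/eqP => e; move: vy1; rewrite ej e.
set q0 := it j.-1.
have sq0 : s q0 = y1 by rewrite ej /q0 -iterS prednK // lt0n.
set p0 := it m.
have sp0 : s p0 = ord0 by rewrite /p0 -iterS cyclic_iter.
have -> : (s^-1)%g ord0 = p0 by rewrite -sp0 permK.
have -> : (s^-1)%g y1 = q0 by rewrite -sq0 permK.
rewrite ltnNge; apply/negP => hle.
have nqp : q0 != p0 by apply/eqP => e; move: sq0; rewrite e sp0 => e'; move: vy1; rewrite -e'.
have hlt : val q0 < val p0.
  by rewrite ltn_neqAle hle andbT; apply: contra nqp => /eqP /val_inj ->.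
have vq0lt : val q0 < m by move: (ltn_ord p0) hlt => /= ? ?; lia.
have q0n0 : val q0 != 0.
  apply/eqP => e; have e' : q0 = ord0 by apply: val_inj.
  by move: sq0; rewrite e' => /(congr1 val); rewrite h0 vy1; lia.
have jn1 : j != 1 by apply/eqP => e; move: q0n0; rewrite /q0 e.
have jn2 : j != 2 by apply/eqP => e; move: vq0lt; rewrite /q0 e /= h0 ltnn.
have jnm : j != m.
  apply/eqP => e; have ep : p0 = y1 by rewrite /p0 ej e.
  have : val q0 < 1 by rewrite -vy1 -ep.
  by move: q0n0; case: (val q0).
have jm : j < m by rewrite ltn_neqAle jnm -ltnS.
have q0n1 : val q0 != 1.
  apply/eqP => e; have e' : q0 = y1 by apply: val_inj; rewrite e vy1.
  have e2 : it j.+1 = it j by rewrite iterS -ej -e' sq0 e'.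
  have : j.+1 = j by apply: (iter_inj _ _ e2); lia.
  lia.
have vq2 : 2 <= val q0 by move: q0n0 q0n1; case: (val q0) => [|[|]].
have pn : p0 != s ord0.
  apply/eqP => e; have e2 : it m = it 1 by [].
  have : m = 1 by apply: (iter_inj _ _ e2); lia.
  lia.
have vp : val p0 < m.
  rewrite ltn_neqAle -ltnS ltn_ord andbT; apply: contra pn => /eqP e.
  by apply/eqP/val_inj; rewrite /= e h0.
have j3 : 3 <= j by move: j0 jn1 jn2; case: j {hj ej q0 sq0 hle nqp hlt vq0lt q0n0 q0n1 vq2 jnm jm} => [|[|[|]]].
have := allP ra j; rewrite mem_iota add0n hj => /(_ isT) /negP; apply.
apply/containsP; exists [:: 2; (val p0).+1; m.+1; (val q0).+1]; last first.
  by rewrite same_order1342; apply/and3P; split; lia.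
rewrite (Cseq_traject _ (x0 := ord0)) // -map_rot.
have -> : [:: 2; (val p0).+1; m.+1; (val q0).+1] =
          [seq (val y).+1 | y <- [:: y1; p0] ++ [:: s ord0; q0]] by rewrite /= vy1 h0.
apply: map_subseq; rewrite /rot; apply: cat_subseq.
  have e1 : y1 = nth ord0 (drop j T) 0 by rewrite nth_drop addn0 nth_traject.
  have e2 : p0 = nth ord0 (drop j T) (m - j) by rewrite nth_drop nth_traject; [congr iter; lia|lia].
  rewrite e1 e2; apply: subseq2_nth; first lia.
  by rewrite size_drop size_traject; lia.
have e1 : s ord0 = nth ord0 (take j T) 1 by rewrite nth_take ?nth_traject //; lia.
have e2 : q0 = nth ord0 (take j T) j.-1 by rewrite nth_take ?nth_traject //; lia.
rewrite e1 e2; apply: subseq2_nth; first lia.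
by rewrite size_takel ?size_traject; lia.
Qed.

End K.

Lemma Fp_inj m : injective (@Fp m.+1).
Proof.
move=> s1 s2; rewrite /Fp => /mulIg e; apply/permP => x.
have := congr1 (fun p : {perm 'I_m.+2} => p (lift ord_max x)) e.
by rewrite /= !lift_perm_lift => /lift_inj.
Qed.

Lemma Fp_surj m (p : {perm 'I_m.+2}) : p ord_max = ord0 -> exists s, p = Fp s.
Proof.
move=> hp.
pose t := (p * tperm ord0 ord_max)%g.
have tmax : t ord_max = ord_max by rewrite permM hp tpermL.
have tl : forall x, ord_max != t (lift ord_max x).
  move=> x; rewrite -{1}tmax; apply/eqP => /perm_inj /eqP.
  by rewrite (negbTE (neq_lift _ _)).
pose f x := odflt ord0 (unlift ord_max (t (lift ord_max x))).
have fE : forall x, lift ord_max (f x) = t (lift ord_max x).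
  move=> x; rewrite /f; case: (unlift_some (tl x)) => y e1 e2.
  by rewrite e2 /= e1.
have finj : injective f.
  move=> x y e; apply: (@lift_inj _ ord_max); apply: (@perm_inj _ t).
  by rewrite -!fE e.
exists (perm finj).
have e : lift_perm ord_max ord_max (perm finj) = t.
  apply/permP => x; case: (unliftP ord_max x) => [y ->|->].
    by rewrite lift_perm_lift permE fE.
  by rewrite lift_perm_id tmax.
by rewrite /Fp e /t -mulgA tperm2 mulg1.
Qed.

Lemma uniq_oneline n (s : {perm 'I_n}) : uniq (oneline s).
Proof.
rewrite /oneline map_inj_uniq ?enum_uniq // => x y /eq_add_S /val_inj; exact: perm_inj.
Qed.

Lemma mem_oneline n (s : {perm 'I_n}) x : x \in oneline s -> 0 < x <= n.
Proof. by case/mapP => i _ ->; rewrite ltn_ord. Qed.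

Lemma rots_crot n (s : {perm 'I_n}) p : rots_avoid s p = ~~ crot (Cseq s) p.
Proof. by rewrite /rots_avoid /crot size_traject -all_predC. Qed.

Section Main.
Variable m : nat.
Hypothesis hm : 1 <= m.
Variable s : {perm 'I_m.+1}.
Hypothesis cs : cyclicb s.
Hypothesis h0 : nth 0 (oneline s) 0 = m.+1.

Lemma vs0 : val (s ord0) = m.
Proof. by move: h0; rewrite -[0]/(nat_of_ord (@ord0 m)) nth_oneline => -[]. Qed.

Lemma Cseq_shape : Cseq s = 1 :: m.+1 :: drop 2 (Cseq s).
Proof.
have hsz : 1 < size (Cseq s) by rewrite size_traject; lia.
have e : forall w : seq nat, 1 < size w -> w = nth 0 w 0 :: nth 0 w 1 :: drop 2 w.
  by case=> [|a [|b w]] //= _; rewrite ?drop0.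
rewrite {1}(e _ hsz); congr (_ :: _ :: _).
rewrite (Cseq_traject _ (x0 := ord0)) // (nth_map ord0) ?size_traject //.
by rewrite nth_traject /= ?vs0 //; lia.
Qed.

Lemma uniq_Cseq : uniq (Cseq s).
Proof.
rewrite (Cseq_traject _ (x0 := ord0)) // map_inj_uniq -?cyclic_traject //.
by move=> x y /eq_add_S /val_inj.
Qed.

Lemma mem_Cseq x : x \in Cseq s -> 0 < x <= m.+1.
Proof. by rewrite (Cseq_traject _ (x0 := ord0)) // => /mapP [y _ ->]; rewrite ltn_ord. Qed.

Lemma rotsEq : rots_avoid (Fp s) p1342 = rots_avoid s p1342.
Proof.
rewrite !rots_crot Fp_Cseq //.
by rewrite (@crot_ext _ m.+1 (drop 2 (Cseq s))) //; [apply: Cseq_shape|apply: uniq_Cseq|apply: mem_Cseq].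
Qed.

Lemma decEq k' : 3 <= k' -> rots_avoid s p1342 ->
  contains (oneline (Fp s)) (delta k'.+1) = contains (oneline s) (delta k').
Proof.
move=> hk ra; rewrite Fp_oneline.
have -> : hF m = hG m.+1 by [].
have uo := uniq_oneline s.
have ho : forall x, x \in oneline s -> 0 < x <= m.+1 by move=> x; apply: mem_oneline.
have np0 : nth 0 (oneline s) (val ((s^-1)%g ord0)) = 1.
  by rewrite -[val _]/(nat_of_ord ((s^-1)%g ord0)) nth_oneline permKV.
have hp0 : val ((s^-1)%g ord0) < size (oneline s) by rewrite size_oneline ltn_ord.
apply/idP/idP.
  have [o' eo] : exists o', oneline s = m.+1 :: o'.
    move: h0 (size_oneline s); case: (oneline s) => [|x o'] //= -> _.
    by exists o'.
  apply: (@E2 m.+1 _ uo ho k' o' eo _ _); last by lia.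
  by rewrite -np0 mem_nth.
move=> hc.
have m2 : 2 <= m.
  case/containsdP: hc => t [ht _ st].
  by have := size_subseq ht; rewrite st size_oneline; lia.
have hK := @K m s m2 cs vs0 ra.
have nq0 : nth 0 (oneline s) (val ((s^-1)%g (inord 1))) = 2.
  rewrite -[val _]/(nat_of_ord ((s^-1)%g (inord 1))) nth_oneline permKV /= inordK //; lia.
set p0 := val ((s^-1)%g ord0) in np0 hp0 hK.
set q0 := val ((s^-1)%g (inord 1)) in nq0 hK.
have hq0 : q0 < m.+1 by rewrite /q0 ltn_ord.
have eo : oneline s = take p0 (oneline s) ++ 1 :: drop p0.+1 (oneline s).
  by rewrite -{1}(cat_take_drop p0 (oneline s)) (drop_nth 0 hp0) np0.
have h2 : 2 \in drop p0.+1 (oneline s).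
  have -> : 2 = nth 0 (drop p0.+1 (oneline s)) (q0 - p0.+1).
    by rewrite nth_drop -nq0; congr nth; lia.
  by apply: mem_nth; rewrite size_drop size_oneline; lia.
exact: (@E1 m.+1 _ uo ho k' _ _ eo h2 (ltnW hk) hc).
Qed.

End Main.

Lemma mainEq m k' (s : {perm 'I_m.+1}) : 1 <= m -> 3 <= k' ->
  [&& cyclicb (Fp s), avoids (oneline (Fp s)) (delta k'.+1),
      rots_avoid (Fp s) p1342, nth 0 (oneline (Fp s)) 0 == m.+1
    & nth 0 (oneline (Fp s)) m.+1 == 1]
  = [&& cyclicb s, avoids (oneline s) (delta k'), rots_avoid s p1342
    & nth 0 (oneline s) 0 == m.+1].
Proof.
move=> hm hk.
have hn1 : nth 0 (oneline (Fp s)) m.+1 = 1.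
  by rewrite Fp_oneline nth_cat size_map size_oneline ltnn subnn.
have hn0 : (nth 0 (oneline (Fp s)) 0 == m.+1) = (nth 0 (oneline s) 0 == m.+1).
  rewrite Fp_oneline nth_cat size_map size_oneline /= (nth_map 0) ?size_oneline // /hF.
  case: (nth 0 (oneline s) 0 =P 1) => [->|//].
  by apply/eqP/eqP; lia.
rewrite hn1 hn0 eqxx andbT Fp_cyclic.
case cs: (cyclicb s) => //=.
case h0: (nth 0 (oneline s) 0 == m.+1); last by rewrite !andbF.
rewrite (@rotsEq m hm s cs (eqP h0)).
case ra: (rots_avoid s p1342); last by rewrite !andbF.
by rewrite /avoids (@decEq m hm s cs (eqP h0) k' hk ra).
Qed.

Theorem lemma3p5 (n k : nat) : 3 <= n -> 4 <= k ->
  #|[set s : {perm 'I_n} | [&& cyclicb s, avoids (oneline s) (delta k),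
                               rots_avoid s p1342,
                               nth 0 (oneline s) 0 == n.-1
                             & nth 0 (oneline s) n.-1 == 1]]|
  = bcirc n.-1 k.-1.
Proof.
case: n => [|[|m]] // hn.
case: k => [|k'] // hk.
have hm : 1 <= m by lia.
have hk' : 3 <= k' by lia.
rewrite /bcirc /= -(card_imset _ (@Fp_inj m)).
apply: eq_card => p; rewrite inE.
apply/idP/imsetP.
  move=> H.
  have hp : p ord_max = ord0.
    move: H => /and5P[_ _ _ _ /eqP].
    rewrite -[m.+1]/(nat_of_ord (@ord_max m.+1)) nth_oneline => -[] e.
    exact: val_inj.
  have [s es] := Fp_surj hp; subst p.
  by exists s => //; rewrite inE -mainEq.
by case=> s hs ->; rewrite mainEq //; rewrite inE in hs.
Qed.
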